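(* Let $p\geq 5$ be a prime and let $r$ be a positive integer such that $3$ does not divide $p^{r}+1$. Then $A(x)=x^{p^r+2}$ is an Alltop function on $\mathbb{F}_{p^{2r}}$.
   Context: For a function $f:\mathbb{F}_{p^n}\to\mathbb{F}_{p^n}$ and $a\in\mathbb{F}_{p^n}$, the difference function is $\Delta_{f,a}(x)=f(x+a)-f(x)$. A function $f:\mathbb{F}_{p^n}\to\mathbb{F}_{p^n}$ is planar if for every $a\in\mathbb{F}_{p^n}^*$ the map $x\mapsto\Delta_{f,a}(x)$ is a bijection of $\mathbb{F}_{p^n}$. A function $A:\mathbb{F}_{p^n}\to\mathbb{F}_{p^n}$ is an Alltop function if $\Delta_{A,a}$ is a planar function for every $a\in\mathbb{F}_{p^n}^*$. *)

(* Defs.v *)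
From mathcomp Require Import all_boot all_order all_algebra all_field.
Set Implicit Arguments. Unset Strict Implicit. Unset Printing Implicit Defensive.
Import GRing.Theory.
Local Open Scope ring_scope.

Definition diff_fun (F : finFieldType) (f : F -> F) (a : F) : F -> F :=
  fun x => f (x + a) - f x.

Definition planar (F : finFieldType) (f : F -> F) : Prop :=
  forall a : F, a != 0 -> bijective (diff_fun f a).

Definition alltop (F : finFieldType) (A : F -> F) : Prop :=
  forall a : F, a != 0 -> planar (diff_fun A a).

(* Main.v *)
Require Import Defs.
From mathcomp Require Import all_boot all_order all_algebra all_field.
From mathcomp Require Import ring zify.
Local Open Scope ring_scope.
Import GRing.Theory.

Theorem theorem4 (p r : nat) (F : finFieldType) :
  prime p -> (5 <= p)%N -> (0 < r)%N -> ~~ (3 %| p ^ r + 1)%N ->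
  #|F| = (p ^ (2 * r))%N ->
  alltop (fun x : F => x ^+ (p ^ r + 2)).
Proof.
move=> pp p5 r0 n3 cardF.
have chF : p \in [pchar F] by apply: (card_finPcharP cardF).
set q := (p ^ r)%N.
have frD : forall x y : F, (x + y) ^+ q = x ^+ q + y ^+ q.
  move=> x y; apply: exprDn_pchar; rewrite pnatX (pnatE _ pp) chF //.
have frK : forall x : F, (x ^+ q) ^+ q = x.
  move=> x; rewrite -exprM -expnD addnn -muln2 mulnC -cardF; exact: expf_card.
have frM : forall x y : F, (x * y) ^+ q = x ^+ q * y ^+ q by move=> x y; rewrite exprMn.
have nz : forall n : nat, (n%:R == 0 :> F) = (p %| n)%N by move=> n; rewrite (dvdn_pcharf chF).
have two0 : (2%:R : F) != 0 by rewrite nz; apply/negP => /dvdn_leq H; have := H isT; lia.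
have three0 : (3%:R : F) != 0 by rewrite nz; apply/negP => /dvdn_leq H; have := H isT; lia.
have q0 : (q == 0%N) = false by rewrite /q expn_eq0 eqn0Ngt prime_gt0 // andbF.
move=> a a0 b b0.
pose t := a * b ^+ q + a ^+ q * b.
have [K Dform] : exists K, forall x, diff_fun (diff_fun (fun x : F => x ^+ (q + 2)) a) b x =
   2%:R * a * b * x ^+ q + 2%:R * t * x + K.
  exists (diff_fun (diff_fun (fun x : F => x ^+ (q + 2)) a) b 0).
  move=> x; rewrite /diff_fun /t !exprD !frD !expr0n /= q0 /=; move: (x ^+ q) (a ^+ q) (b ^+ q) => X A B; ring.
apply: injF_bij => x y Dxy.
apply/eqP; rewrite -subr_eq0; apply/negP => /negP z0.
set z := x - y in z0.
have fz : x ^+ q = z ^+ q + y ^+ q by rewrite -frD /z subrK.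
have E : a * b * z ^+ q + t * z = 0.
  move: Dxy; rewrite !Dform fz => /addIr /eqP.
  rewrite -subr_eq0 => /eqP H.
  apply: (mulfI two0).
  rewrite mulr0 -H /z; ring.
have ft : t ^+ q = t by rewrite /t frD !frM !frK addrC.
have zq0 : z ^+ q != 0 by rewrite expf_neq0.
have E' : a ^+ q * b ^+ q * z + t * z ^+ q = 0.
  by move: (congr1 (fun w => w ^+ q) E); rewrite frD !frM frK ft expr0n q0.
have Key : a * b * (a ^+ q * b ^+ q) - t ^+ 2 = 0.
  have H : (a * b * (a ^+ q * b ^+ q) - t ^+ 2) * (z * z ^+ q) =
    (a * b * z ^+ q + t * z) * (a ^+ q * b ^+ q * z) - t * z * (a ^+ q * b ^+ q * z + t * z ^+ q).
    by ring.
  move: H; rewrite E E' mul0r mulr0 subr0 => /eqP; rewrite mulf_eq0 mulf_eq0 (negbTE z0) (negbTE zq0) orbF.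
  by rewrite orbF => /eqP.
pose u := a * b ^+ q.
have uq : u ^+ q = a ^+ q * b by rewrite /u frM frK.
have u0 : u != 0 by rewrite mulf_neq0 // expf_neq0.
have v0 : u ^+ q != 0 by rewrite expf_neq0.
have Q : u ^+ 2 + u * u ^+ q + (u ^+ q) ^+ 2 = 0.
  move: Key; rewrite /t -/u -uq => H; rewrite -oppr0 -H !uq /u; ring.
pose w := u ^+ q / u.
have W2 : w ^+ 2 + w + 1 = 0.
  apply: (mulIf (expf_neq0 2 u0)); rewrite mul0r -Q /w; field; exact: u0.
have W3 : w ^+ 3 = 1.
  apply/eqP; rewrite -subr_eq0; apply/eqP.
  have -> : w ^+ 3 - 1 = (w - 1) * (w ^+ 2 + w + 1) by ring.
  by rewrite W2 mulr0.
have Wq : w ^+ (q + 1) = 1.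
  rewrite exprD expr1 /w exprMn exprVn frK; field; rewrite u0 v0 //.
have w1 : w = 1.
  move: Wq; rewrite (divn_eq (q + 1) 3) exprD (mulnC _ 3) exprM W3 expr1n mul1r.
  have : ((q + 1) %% 3 != 0)%N by rewrite -/(dvdn 3 _) .
  have : ((q + 1) %% 3 < 3)%N by rewrite ltn_mod.
  case: ((q + 1) %% 3)%N => [|[|[|]]] // _ _.
  move=> H2; have : w ^+ 3 = w by rewrite exprS H2 mulr1.
  by rewrite W3.
move: W2; rewrite w1 expr1n => H3; move: three0; have -> : (3 : F) = 1 + 1 + 1 by ring.
by rewrite H3 eqxx.
Qed.
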